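(* Algorithm $\mathsf{EqualCellsCounter}$ (described in the context) has audit complexity $O(n^2)$: there is an auditor which, given $F$ (on $n$ variables), the estimate $C_{est}$ and the certificate $h$ output by $\mathsf{EqualCellsCounter}(F)$, makes a single query to a $\Sigma_2^P$ oracle on a quantified Boolean formula with $O(n^2)$ variables, accepts the algorithm's output, and whenever it accepts, $C_{est}$ is within a factor $16$ of $|\mathrm{Sol}(F)|$.
   Context: $\mathrm{Sol}(F)$ is the set of satisfying assignments of $F$; $\log$ is base 2. $\mathcal{H}(n,m,n)$ is a fixed explicit $n$-wise independent family of hash functions $\{0,1\}^n\to\{0,1\}^m$, each member described by polynomially many bits. For positive integers $\ell,u$, $\varphi^{\langle F,\ell,u\rangle}_{Cells}(m)$ is $\exists h\in\mathcal{H}(n,m,n)\ \forall \alpha\in\{0,1\}^m\ \forall y_1,\dots,y_{u+1}\in\{0,1\}^n\ \exists z_1,\dots,z_\ell\in\{0,1\}^n:$ $\Big(\bigwedge_{i=1}^{u+1}(F(y_i)\wedge h(y_i)=\alpha)\rightarrow\bigvee_{1\le i<j\le u+1}(y_i=y_j)\Big)\wedge\Big(\bigwedge_{i=1}^{\ell}(F(z_i)\wedge h(z_i)=\alpha)\wedge\bigwedge_{1\le i<j\le\ell}(z_i\neq z_j)\Big).$ Algorithm $\mathsf{EqualCellsCounter}(F)$: set $u=16384n$, $\ell=1024n$; for $m=1,\dots,n$ query a $\Sigma_3^P$ oracle on $\varphi^{\langle F,\ell,u\rangle}_{Cells}(m)$; at the first $m$ for which it is true, output $C_{est}=\ell\cdot2^m$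 and the witnessing $h$ as certificate. An auditor for an algorithm $A$ takes $F$, the estimate and the certificate produced by $A$, and uses an oracle to certify that the estimate lies within the claimed approximation factor of $|\mathrm{Sol}(F)|$; $A$ has audit complexity $r$ if it has an auditor making exactly one call to a $\Sigma_2^P$ oracle, on a formula with at most $r$ variables (the paper's auditor recovers $m=\lfloor\log(C_{est}/n)\rfloor-10$ and checks $\varphi^{\langle F,\ell,u\rangle}_{Cells}(m)$ with $h$ substituted by the certificate). *)

(* Defs.v *)
From mathcomp Require Import all_boot.
Set Implicit Arguments.
Unset Strict Implicit.
Unset Printing Implicit Defensive.

Definition bv (k : nat) := k.-tuple bool.

Definition sub_bv (N : nat) (x : bv N) (off len : nat) : bv len :=
  [tuple nth false x (off + j) | j < len].

(* A formula F on n variables, given by its semantics; Sol(F). *)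
Definition Sol (n : nat) (F : bv n -> bool) : {set bv n} := [set x | F x].

Definition u_par (n : nat) : nat := 16384 * n.
Definition ell_par (n : nat) : nat := 1024 * n.

(* The explicit hash family H(n,m,n): members of H(n,m,n) are the bit
   strings of length [hlen n m]; [heval n m d] is the hash function
   {0,1}^n -> {0,1}^m described by d. *)
Record hashFamily := HashFamily {
  hlen : nat -> nat -> nat;
  heval : forall n m : nat, seq bool -> bv n -> bv m }.

(* The quantifier-free matrix of phi_Cells^{<F,l,u>}(m) with h substituted
   by (the function described by) [hs].  Universally quantified block x:
   alpha (m bits) followed by y_1..y_{u+1} (n bits each);
   existentially quantified block z: z_1..z_l (n bits each). *)
Definition cells_matrix (H : hashFamily) (n : nat) (F : bv n -> bool)
    (m : nat) (hs : seq bool)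
    (x : bv (m + (u_par n).+1 * n)) (z : bv (ell_par n * n)) : bool :=
  let h := @heval H n m hs in
  let alpha : bv m := sub_bv x 0 m in
  let y := fun i : nat => sub_bv x (m + i * n) n in
  let zz := fun i : nat => sub_bv z (i * n) n in
  [&& ([forall i : 'I_(u_par n).+1, F (y i) && (h (y i) == alpha)] ==>
       [exists i : 'I_(u_par n).+1, exists j : 'I_(u_par n).+1,
          (i < j) && (y i == y j)]),
      [forall i : 'I_(ell_par n), F (zz i) && (h (zz i) == alpha)] &
      [forall i : 'I_(ell_par n), forall j : 'I_(ell_par n),
          (i < j) ==> (zz i != zz j)]].
Arguments cells_matrix H [n] F m hs x z.

Definition cells_holds_with (H : hashFamily) (n : nat) (F : bv n -> bool)
    (m : nat) (hs : seq bool) : Prop :=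
  forall x, exists z, cells_matrix H F m hs x z.

Definition phi_cells (H : hashFamily) (n : nat) (F : bv n -> bool) (m : nat)
  : Prop :=
  exists hs : seq bool, size hs = hlen H n m /\ cells_holds_with H F m hs.

Definition ECC_outputs (H : hashFamily) (n : nat) (F : bv n -> bool)
    (Cest : nat) (cert : seq bool) : Prop :=
  exists m : nat,
    [/\ 1 <= m <= n,
        (forall m', 1 <= m' < m -> ~ phi_cells H F m'),
        size cert = hlen H n m,
        cells_holds_with H F m cert &
        Cest = ell_par n * 2 ^ m].

(* A Sigma_2 query  forall x in {0,1}^nu, exists y in {0,1}^ne, M x y. *)
Record sigma2_query := S2Q {
  s2_nu : nat;
  s2_ne : nat;
  s2_matrix : bv s2_nu -> bv s2_ne -> bool }.

Definition s2_nvars (q : sigma2_query) : nat := s2_nu q + s2_ne q.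

Definition s2_oracle (q : sigma2_query) : Prop :=
  forall x : bv (s2_nu q), exists y : bv (s2_ne q), @s2_matrix q x y.

(* The paper's auditor: recover m = floor(log(Cest/n)) - 10 and query
   phi_Cells(m) with h substituted by the certificate.  If the recovered
   value is out of range (floor(log(Cest/n)) - 10 negative or > n), the
   single query is the trivially false formula with no variables. *)
Definition auditor_query (H : hashFamily) (n : nat) (F : bv n -> bool)
    (Cest : nat) (cert : seq bool) : sigma2_query :=
  let k := trunc_log 2 (Cest %/ n) in
  if (10 <= k <= n + 10)
  then @S2Q _ _ (cells_matrix H F (k - 10) cert)
  else @S2Q 0 0 (fun _ _ => false).

Definition auditor_accepts (H : hashFamily) (n : nat) (F : bv n -> bool)
    (Cest : nat) (cert : seq bool) : Prop :=
  s2_oracle (auditor_query H F Cest cert).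

Definition within_factor (k c s : nat) : Prop := c <= k * s /\ s <= k * c.

(* Main.v *)
Require Import Defs.
From mathcomp Require Import all_boot zify.
Set Implicit Arguments. Unset Strict Implicit.

Lemma nth_mk (N : nat) (g : nat -> bool) p : p < N ->
  nth false [tuple g j | j < N] p = g p.
Proof. move=> Hp. by rewrite -[p]/(nat_of_ord (Ordinal Hp)) nth_mktuple. Qed.

Lemma sub_bv_mk N (g : nat -> bool) off len (t : bv len) :
  off + len <= N -> (forall j, j < len -> g (off + j) = nth false t j) ->
  sub_bv [tuple g j | j < N] off len = t.
Proof.
move=> Hle Hg; apply: eq_from_tnth => j.
rewrite /sub_bv tnth_mktuple nth_mk; last by have := ltn_ord j; lia.
by rewrite Hg // (tnth_nth false).
Qed.

Definition mkg m n (alpha : bv m) (Y : nat -> bv n) (j : nat) : bool :=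
  if j < m then nth false alpha j
  else nth false (Y ((j - m) %/ n)) ((j - m) %% n).
Definition mkx m n U (alpha : bv m) (Y : nat -> bv n) : bv (m + U * n) :=
  [tuple mkg alpha Y j | j < m + U * n].

Lemma mkx_alpha m n U alpha Y : sub_bv (@mkx m n U alpha Y) 0 m = alpha.
Proof.
rewrite /mkx; apply: (@sub_bv_mk (m + U * n) (mkg alpha Y)); first lia.
by move=> j Hj; rewrite /mkg add0n Hj.
Qed.

Lemma mkx_y m n U alpha Y i : i < U -> sub_bv (@mkx m n U alpha Y) (m + i * n) n = Y i.
Proof.
move=> Hi; rewrite /mkx; apply: (@sub_bv_mk (m + U * n) (mkg alpha Y)).
  rewrite -addnA leq_add2l -mulSnr leq_mul2r; lia.
move=> j Hj; rewrite /mkg.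
have -> : (m + i * n + j < m) = false by lia.
have -> : m + i * n + j - m = i * n + j by lia.
by rewrite divnMDl ?(divn_small Hj) ?addn0 ?modnMDl ?(modn_small Hj) //; lia.
Qed.

Section Bounds.
Variables (H : hashFamily) (n : nat) (F : bv n -> bool) (m : nat) (hs : seq bool).
Hypothesis Hacc : forall x, exists z, cells_matrix H F m hs x z.
Let h := @heval H n m hs.
Let cell (a : bv m) := [set x | F x && (h x == a)].

Lemma cell_lb a : ell_par n <= #|cell a|.
Proof.
have [z Hz] := Hacc (@mkx m n (u_par n).+1 a (fun _ => nseq_tuple n false)).
move: Hz; rewrite /cells_matrix mkx_alpha => /and3P [_ /forallP Hin /forallP Hdist].
set f := fun i : 'I_(ell_par n) => sub_bv z (i * n) n.
have finj : injective f.
  move=> i j; rewrite /f => Hij; have [ij|ji|e] := ltngtP i j; last exact: val_inj.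
  - by move: (Hdist i) => /forallP /(_ j); rewrite ij /= Hij eqxx.
  - by move: (Hdist j) => /forallP /(_ i); rewrite ji /= Hij eqxx.
rewrite -[ell_par n]card_ord -(card_imset (mem 'I_(ell_par n)) finj).
apply: subset_leq_card; apply/subsetP => x /imsetP [i _ ->].
by rewrite inE; exact: Hin.
Qed.

Lemma cell_ub a : #|cell a| <= u_par n.
Proof.
rewrite leqNgt; apply/negP => Hlt.
set s := enum (cell a).
have Hs : (u_par n).+1 <= size s by rewrite -cardE.
set Y := fun i => nth (nseq_tuple n false) s i.
have [z Hz] := Hacc (@mkx m n (u_par n).+1 a Y).
move: Hz; rewrite /cells_matrix mkx_alpha => /and3P [Himp _ _].
have Hy : forall i : 'I_(u_par n).+1, sub_bv (@mkx m n (u_par n).+1 a Y) (m + i * n) n = Y i.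
  by move=> i; rewrite mkx_y.
have Hant : [forall i : 'I_(u_par n).+1,
   F (sub_bv (@mkx m n (u_par n).+1 a Y) (m + i * n) n) &&
   (heval H m hs (sub_bv (@mkx m n (u_par n).+1 a Y) (m + i * n) n) == a)].
  apply/forallP => i; rewrite Hy.
  have : Y i \in cell a.
    by rewrite -mem_enum; apply: mem_nth; exact: leq_trans (ltn_ord i) Hs.
  by rewrite /cell inE.
move: Himp; rewrite Hant.
move=> /= /existsP [i /existsP [j /andP [ij]]].
rewrite !Hy /Y nth_uniq ?enum_uniq ?(leq_trans (ltn_ord i) Hs) ?(leq_trans (ltn_ord j) Hs) //.
by move=> /eqP E; move: ij; rewrite E ltnn.
Qed.

Lemma card_Sol_sum : #|Sol F| = \sum_(a : bv m) #|cell a|.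
Proof.
rewrite -sum1_card (partition_big h xpredT) //=.
apply: eq_bigr => a _; rewrite -sum1_card.
apply: eq_bigl => x; by rewrite /cell /Sol !inE.
Qed.

Lemma Sol_bounds : ell_par n * 2 ^ m <= #|Sol F| <= u_par n * 2 ^ m.
Proof.
have E : #|{: bv m}| = 2 ^ m by rewrite card_tuple card_bool.
rewrite card_Sol_sum; apply/andP; split.
  rewrite mulnC -E -sum_nat_const; apply: leq_sum => a _; exact: cell_lb.
rewrite mulnC -E -sum_nat_const; apply: leq_sum => a _; exact: cell_ub.
Qed.
End Bounds.

Theorem corollary4p3 :
  exists c : nat,
    forall (H : hashFamily) (n : nat) (F : bv n -> bool)
           (Cest : nat) (cert : seq bool),
      [/\ s2_nvars (auditor_query H F Cest cert) <= c * n ^ 2,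
          ECC_outputs H F Cest cert -> auditor_accepts H F Cest cert &
          auditor_accepts H F Cest cert -> within_factor 16 Cest #|Sol F| ].
Proof.
exists (10 * 1741) => H n F Cest cert; split.
- rewrite /auditor_query /=; case: ifP => Hk; rewrite /s2_nvars /= ?leq0n //.
  rewrite /u_par /ell_par; move: Hk; set k := trunc_log 2 (Cest %/ n) => Hk.
  have nn : n <= n * n by case: (n) => // n'; rewrite leq_pmulr.
  rewrite expnS expn1. rewrite (_ : 16384 = 128 * 128) //; nia.
- case=> m [/andP [m1 mn] _ _ Hc ->].
  have n0 : 0 < n by lia.
  rewrite /auditor_accepts /auditor_query /=.
  have -> : trunc_log 2 (ell_par n * 2 ^ m %/ n) = m + 10.
    have -> : ell_par n * 2 ^ m = n * 2 ^ (m + 10).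
      rewrite /ell_par expnD (_ : 2 ^ 10 = 1024) //; nia.
    by rewrite mulKn // trunc_expnK.
  rewrite addnK.
  have -> : (10 <= m + 10 <= n + 10) by lia.
  exact: Hc.
- rewrite /auditor_accepts /auditor_query /=.
  case: ifP => Hk; last by move=> /(_ [tuple]) [y].
  move: Hk; set k := trunc_log 2 (Cest %/ n) => Hk Hacc.
  have /andP [lb ub] := Sol_bounds Hacc.
  have k10 : 0 < k by lia.
  have q0 : 0 < Cest %/ n.
    by rewrite lt0n; apply/negP => /eqP E; move: k10; rewrite /k E.
  have n0 : 0 < n by case: n {Hacc lb ub k Hk k10} F q0 => //; rewrite divn0.
  have P1 := trunc_logP (isT : 1 < 2) q0.
  have P2 := trunc_log_ltn (Cest %/ n) (isT : 1 < 2).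
  rewrite -/k in P1 P2.
  have Ek : 2 ^ k = 1024 * 2 ^ (k - 10).
    by rewrite -[1024]/(2 ^ 10) -expnD subnKC //; lia.
  have Ek1 : 2 ^ k.+1 = 2048 * 2 ^ (k - 10).
    by rewrite expnS Ek mulnA.
  rewrite Ek in P1; rewrite Ek1 in P2.
  have D1 : n * (Cest %/ n) <= Cest by rewrite mulnC leq_trunc_div.
  have D2 : Cest < n * (Cest %/ n).+1 by rewrite mulnC ltn_ceil.
  move: lb ub D1 D2 P1 P2; rewrite /ell_par /u_par (_ : 16384 = 128 * 128) //.
  rewrite mulnS.
  move: (2 ^ (k - 10)) (Cest %/ n) (#|Sol F|) => P q S lb ub D1 D2 P1 P2.
  have M1 : n * (1024 * P) <= n * q by rewrite leq_mul2l P1 orbT.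
  have M2 : n * q.+1 <= n * (2048 * P) by rewrite leq_mul2l P2 orbT.
  rewrite mulnS in M2.
  rewrite /within_factor; split; lia.
Qed.
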